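(* Let $s\in\mathbb R$, $p,q\in(0,+\infty]$ and $x_0\in\mathbb R^d$, and assume the wavelet system satisfies the dyadic covering property. Then there exists a sequence $\mathcal C\in b^{s,q}_p$ whose divergence exponent at $x_0$ satisfies $\delta_{\mathcal C}(x_0)=-s+\frac dp$.
   Context: Setting: integers $d,N\ge1$, bounded fast-decaying $\psi^{(1)},\dots,\psi^{(N)}:\mathbb R^d\to\mathbb C$, wavelets $\psi^{(i)}_{j,k}(x)=\psi^{(i)}(2^jx-k)$, $j\ge0$, $k\in\mathbb Z^d$; dyadic cubes $\lambda_{j,k}=\prod_{m=1}^d[k_m2^{-j},(k_m+1)2^{-j})$ of scale $j$; coefficients indexed by $(i,\lambda)$; $\Lambda_j$ = pairs $(i,\lambda)$ with $\lambda$ of scale $j$. $b^{s,q}_p$: sequences $(c^{(i)}_\lambda)$ with $\big(\big(\sum_{(i,\lambda)\in\Lambda_j}|c^{(i)}_\lambda2^{(s-d/p)j}|^p\big)^{1/p}\big)_{j\ge0}\in\ell^q$ (supremum if $p=\infty$; $d/p=0$ if $p=\infty$). Divergence exponent $\delta_{\mathcal C}(x)$: supremum of $\gamma$ such that there exist $C>0$ and $(i_n,j_n,k_n)$ with $j_n\to\infty$ and $|c^{(i_n)}_{j_n,k_n}\psi^{(i_n)}_{j_n,k_n}(x)|\ge C2^{\gamma j_n}$. Dyadic covering property: there exist $C_0>0$ and finitely many triplets $(i_l,j_l,k_l)$ with $j_l\ge1$ such that every $x\in[0,1)^d$ has some $l$ with $|\psi^{(i_l)}(2^{j_l}x-k_l)|\ge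 C_0$. *)

(* Defs.v *)
From Stdlib Require Import Reals Lra ZArith List.
Open Scope R_scope.

(* Complex numbers modelled as pairs (re, im); only modulus and products matter. *)
Definition Cx := (R * R)%type.
Definition Cnorm (z : Cx) : R := sqrt (fst z * fst z + snd z * snd z).

(* Points of R^d and Z^d are lists of length d. *)
Definition euclid_norm (x : list R) : R := sqrt (fold_right Rplus 0 (map (fun t => t * t) x)).

Inductive ext : Type := Fin (r : R) | PInf.
Definition valid_exp (p : ext) : Prop := match p with Fin r => 0 < r | PInf => True end.
Definition d_over (d : nat) (p : ext) : R := match p with Fin r => INR d / r | PInf => 0 end.

Definition rpow (x a : R) : R := if Rle_dec x 0 then 0 else Rpower x a.
Definition pow2 (g : R) : R := Rpower 2 g.

Fixpoint dil (j : nat) (k : list Z) (x : list R) : list R :=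
  match x, k with
  | xm :: x', km :: k' => (pow2 (INR j) * xm - IZR km) :: dil j k' x'
  | _, _ => nil
  end.

Definition wav (psi : nat -> list R -> Cx) (i j : nat) (k : list Z) (x : list R) : Cx :=
  psi i (dil j k x).

Definition wavelet_ok (d : nat) (f : list R -> Cx) : Prop :=
  (exists B, forall x, length x = d -> Cnorm (f x) <= B) /\
  (forall M : nat, exists Cst, forall x, length x = d ->
       Cnorm (f x) * (1 + euclid_norm x) ^ M <= Cst).

Definition dyadic_covering (d N : nat) (psi : nat -> list R -> Cx) : Prop :=
  exists C0, 0 < C0 /\
  exists L : list (nat * nat * list Z),
    (forall t, In t L -> let '(i, j, k) := t in (i < N)%nat /\ (1 <= j)%nat /\ length k = d) /\
    forall x, length x = d -> (forall m, (m < d)%nat -> 0 <= nth m x 0 < 1) ->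
      exists t, In t L /\ let '(i, j, k) := t in C0 <= Cnorm (psi i (dil j k x)).

(* coefficient families: c i j k = c^{(i)}_{j,k}, i < N, j >= 0, k in Z^d *)
Definition coeffs := nat -> nat -> list Z -> Cx.

Definition zrange (n : nat) : list Z :=
  map (fun t => (Z.of_nat t - Z.of_nat n)%Z) (seq 0 (2 * n + 1)).
Fixpoint box (d n : nat) : list (list Z) :=
  match d with
  | O => nil :: nil
  | S d' => flat_map (fun z => map (cons z) (box d' n)) (zrange n)
  end.

Definition sumR (l : list R) : R := fold_right Rplus 0 l.
Definition maxR (l : list R) : R := fold_right Rmax 0 l.

(* The true layer norm is the (increasing) limit as n -> infinity. *)
Definition layer (d N : nat) (s : R) (p : ext) (c : coeffs) (j n : nat) : R :=
  match p with
  | Fin r => pow2 ((s - INR d / r) * INR j) *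
      rpow (sumR (flat_map (fun i => map (fun k => rpow (Cnorm (c i j k)) r) (box d n)) (seq 0 N)))
           (1 / r)
  | PInf => pow2 (s * INR j) *
      maxR (flat_map (fun i => map (fun k => Cnorm (c i j k)) (box d n)) (seq 0 N))
  end.

(* membership in b^{s,q}_p: the sequence of layer norms is in l^q
   (sup over boxes commutes with finite sums of increasing sequences) *)
Definition in_besov (d N : nat) (s : R) (p q : ext) (c : coeffs) : Prop :=
  match q with
  | Fin r => exists M, forall (J n : nat),
      sumR (map (fun j => rpow (layer d N s p c j n) r) (seq 0 (S J))) <= M
  | PInf => exists M, forall (j n : nat), layer d N s p c j n <= M
  end.

(* the set of gamma in the definition of the divergence exponent at x *)
Definition div_set (d N : nat) (psi : nat -> list R -> Cx) (c : coeffs) (x : list R) (g : R) : Prop :=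
  exists Cst, 0 < Cst /\
  exists (I Jn : nat -> nat) (K : nat -> list Z),
    (forall n, (I n < N)%nat /\ length (K n) = d) /\
    (forall M : nat, exists n0 : nat, forall n, (n0 <= n)%nat -> (M <= Jn n)%nat) /\
    (forall n, Cst * pow2 (g * INR (Jn n)) <=
               Cnorm (c (I n) (Jn n) (K n)) * Cnorm (wav psi (I n) (Jn n) (K n) x)).

(* Main.v *)
Require Import Defs.
From Stdlib Require Import Reals List ZArith.
From Stdlib Require Import Lra Lia Classical IndefiniteDescription.
Open Scope R_scope.

Lemma NoDup_flat_map' {A B : Type} (f : A -> list B) (l : list A) :
  NoDup l -> (forall a, In a l -> NoDup (f a)) ->
  (forall a b y, In a l -> In b l -> In y (f a) -> In y (f b) -> a = b) ->
  NoDup (flat_map f l).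
Proof.
  induction l as [|a l IH]; intros Hl Hf Hd; simpl; [constructor|].
  inversion Hl; subst.
  apply NoDup_app.
  - apply Hf; simpl; auto.
  - apply IH; auto. intros; apply Hf; simpl; auto.
    intros a0 b y Ha Hb; apply Hd; simpl; auto.
  - intros y Hy Hy'. apply in_flat_map in Hy' as [b [Hb Hyb]].
    assert (a = b) by (apply (Hd a b y); simpl; auto). subst. contradiction.
Qed.

Lemma zrange_NoDup n : NoDup (zrange n).
Proof.
  unfold zrange. apply NoDup_map_NoDup_ForallPairs; [|apply seq_NoDup].
  intros x y _ _ H. lia.
Qed.

Lemma box_NoDup d n : NoDup (box d n).
Proof.
  induction d; simpl. constructor; [simpl; tauto|constructor].
  apply NoDup_flat_map'. apply zrange_NoDup.
  - intros a _. apply NoDup_map_NoDup_ForallPairs; auto.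
    intros x y _ _ H; injection H; auto.
  - intros a b y _ _ H1 H2. apply in_map_iff in H1 as [x1 [<- _]].
    apply in_map_iff in H2 as [x2 [H _]]. injection H; auto.
Qed.

Lemma sumR_zero {A} (F : A -> R) l : (forall x, In x l -> F x = 0) -> sumR (map F l) = 0.
Proof. induction l; simpl; intros H; auto. rewrite H, IHl; auto; lra. Qed.

Lemma sumR_nonneg {A} (F : A -> R) l : (forall x, In x l -> 0 <= F x) -> 0 <= sumR (map F l).
Proof. induction l; simpl; intros H; [lra|]. pose proof (H a (or_introl eq_refl)).
  pose proof (IHl (fun x h => H x (or_intror h))). lra. Qed.

Lemma sumR_single {A} (F : A -> R) l x0 :
  NoDup l -> (forall x, x <> x0 -> F x = 0) -> 0 <= F x0 -> sumR (map F l) <= F x0.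
Proof.
  induction l as [|a l IH]; intros Hl HF H0; simpl; [lra|].
  inversion Hl; subst.
  destruct (classic (a = x0)).
  - subst. rewrite sumR_zero; [lra|]. intros x Hx. apply HF. intro; subst; contradiction.
  - rewrite HF by auto. specialize (IH H3 HF H0). lra.
Qed.

Lemma sumR_term {A} (F : A -> R) l x0 :
  In x0 l -> (forall x, In x l -> 0 <= F x) -> F x0 <= sumR (map F l).
Proof.
  induction l as [|a l IH]; simpl; intros Hin H; [tauto|].
  destruct Hin as [->|Hin].
  - pose proof (sumR_nonneg F l (fun x h => H x (or_intror h))). lra.
  - pose proof (H a (or_introl eq_refl)). pose proof (IH Hin (fun x h => H x (or_intror h))). lra.
Qed.

Lemma sumR_app l1 l2 : sumR (l1 ++ l2) = sumR l1 + sumR l2.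
Proof. induction l1; simpl; try rewrite IHl1; lra. Qed.

Lemma sumR_flat_map {A B} (F : A -> B -> R) (la : list A) (lb : list B) :
  sumR (flat_map (fun i => map (F i) lb) la) = sumR (map (fun i => sumR (map (F i) lb)) la).
Proof. induction la; simpl; auto. rewrite sumR_app, IHla; auto. Qed.

Lemma sumR_plus {A} (F G : A -> R) l : sumR (map (fun x => F x + G x) l) = sumR (map F l) + sumR (map G l).
Proof. induction l; simpl; try rewrite IHl; lra. Qed.

Lemma sumR_swap {A B} (F : A -> B -> R) (la : list A) (lb : list B) :
  sumR (map (fun i => sumR (map (F i) lb)) la) = sumR (map (fun j => sumR (map (fun i => F i j) la)) lb).
Proof.
  induction la; simpl.
  - rewrite sumR_zero; auto.
  - rewrite IHla. rewrite <- sumR_plus. reflexivity.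
Qed.

Lemma sumR_le {A} (F G : A -> R) l : (forall x, In x l -> F x <= G x) -> sumR (map F l) <= sumR (map G l).
Proof. induction l; simpl; intros H; [lra|]. pose proof (H a (or_introl eq_refl)).
  pose proof (IHl (fun x h => H x (or_intror h))). lra. Qed.

Lemma maxR_le l V : 0 <= V -> (forall x, In x l -> x <= V) -> maxR l <= V.
Proof. induction l; simpl; intros H0 H; auto. apply Rmax_lub; auto. Qed.

Lemma rpow_nonneg x a : 0 <= rpow x a.
Proof. unfold rpow, Rpower. destruct Rle_dec; [lra|]. left; apply exp_pos. Qed.

Lemma rpow_le0 x a : x <= 0 -> rpow x a = 0.
Proof. unfold rpow. destruct Rle_dec; auto; lra. Qed.

Lemma rpow_mono x y a : 0 <= a -> x <= y -> rpow x a <= rpow y a.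
Proof.
  intros Ha Hxy. destruct (Rle_dec x 0). rewrite rpow_le0 by auto; apply rpow_nonneg.
  unfold rpow. destruct Rle_dec; [lra|]. destruct Rle_dec; [lra|].
  apply Rle_Rpower_l; lra.
Qed.

Lemma Rpower_pos x a : 0 < Rpower x a.
Proof. unfold Rpower; apply exp_pos. Qed.

Lemma rpow_inv V r : 0 <= V -> 0 < r -> rpow (rpow V r) (1 / r) = V.
Proof.
  intros HV Hr. destruct (Rle_dec V 0).
  - rewrite (rpow_le0 V) by auto. rewrite rpow_le0; lra.
  - unfold rpow at 2. destruct Rle_dec; [lra|].
    unfold rpow. destruct Rle_dec as [h|]. pose proof (Rpower_pos V r); lra.
    rewrite Rpower_mult. replace (r * (1 / r)) with 1 by (field; lra).
    apply Rpower_1; lra.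
Qed.

Lemma rpow_pos_eq x a : 0 < x -> rpow x a = Rpower x a.
Proof. intros. unfold rpow. destruct Rle_dec; auto; lra. Qed.

Lemma pow2_pos g : 0 < pow2 g.
Proof. apply Rpower_pos. Qed.

Lemma pow2_plus a b : pow2 (a + b) = pow2 a * pow2 b.
Proof. unfold pow2; apply Rpower_plus. Qed.

Lemma pow2_le a b : a <= b -> pow2 a <= pow2 b.
Proof. intros; unfold pow2; apply Rle_Rpower; lra. Qed.

Lemma pow2_0 : pow2 0 = 1.
Proof. unfold pow2; apply Rpower_O; lra. Qed.

Lemma Cnorm_nonneg z : 0 <= Cnorm z.
Proof. apply sqrt_pos. Qed.

Lemma Cnorm_real x : 0 <= x -> Cnorm (x, 0) = x.
Proof. intros. unfold Cnorm; simpl. replace (x * x + 0 * 0) with (x*x) by ring. apply sqrt_square; auto. Qed.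

Lemma layer_bound d N s p c j n i0 k0 V : valid_exp p -> 0 <= V ->
  (forall i k, (i <> i0 \/ k <> k0) -> Cnorm (c i j k) = 0) -> Cnorm (c i0 j k0) <= V ->
  layer d N s p c j n <= pow2 (-(-s + d_over d p) * INR j) * V.
Proof.
  intros Hp HV H0 H1. destruct p as [r|]; simpl in *.
  - replace (- (- s + INR d / r) * INR j) with ((s - INR d / r) * INR j) by ring.
    apply Rmult_le_compat_l. left; apply pow2_pos.
    rewrite sumR_flat_map.
    assert (Hs : sumR (map (fun i => sumR (map (fun k => rpow (Cnorm (c i j k)) r) (box d n))) (seq 0 N)) <= rpow V r).
    { eapply Rle_trans. apply (sumR_single _ _ i0). apply seq_NoDup.
      - intros x Hx. apply sumR_zero. intros k _. rewrite H0 by auto. apply rpow_le0; lra.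
      - apply sumR_nonneg; intros; apply rpow_nonneg.
      - eapply Rle_trans. apply (sumR_single _ _ k0). apply box_NoDup.
        + intros k Hk. rewrite H0 by auto. apply rpow_le0; lra.
        + apply rpow_nonneg.
        + apply rpow_mono; lra. }
    eapply Rle_trans. apply rpow_mono; [|exact Hs]. left; apply Rdiv_lt_0_compat; lra.
    rewrite rpow_inv; lra.
  - replace (- (- s + 0) * INR j) with (s * INR j) by ring.
    apply Rmult_le_compat_l. left; apply pow2_pos.
    apply maxR_le; auto. intros x Hx. apply in_flat_map in Hx as [i [_ Hx]].
    apply in_map_iff in Hx as [k [<- _]].
    destruct (classic (i = i0 /\ k = k0)) as [[-> ->]|h]; auto.
    rewrite H0; auto. tauto.
Qed.

Definition fl (x : R) : Z := (up x - 1)%Z.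
Lemma fl_spec x : 0 <= x - IZR (fl x) < 1.
Proof. unfold fl. rewrite minus_IZR. pose proof (archimed x). simpl. lra. Qed.

Fixpoint comb (j m : nat) (x : list R) (k : list Z) : list Z :=
  match x, k with
  | t :: x', km :: k' => (2 ^ (Z.of_nat j) * fl (pow2 (INR m) * t) + km)%Z :: comb j m x' k'
  | _, _ => nil
  end.

Definition fracs (m : nat) (x : list R) : list R :=
  map (fun t => pow2 (INR m) * t - IZR (fl (pow2 (INR m) * t))) x.

Lemma dil_comb j m x k : dil j k (fracs m x) = dil (m + j) (comb j m x k) x.
Proof.
  revert k; induction x as [|t x IH]; intros [|km k]; simpl; auto.
  f_equal; [|apply IH].
  rewrite plus_INR, pow2_plus, plus_IZR, mult_IZR, <- pow_IZR.
  replace (IZR 2) with 2 by reflexivity.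
  unfold pow2. rewrite (Rpower_pow j 2) by lra. ring.
Qed.

Lemma length_comb j m x k : length k = length x -> length (comb j m x k) = length x.
Proof. revert k; induction x; intros [|km k]; simpl; intros; auto; discriminate. Qed.

Lemma length_dil j k x : length k = length x -> length (dil j k x) = length x.
Proof. revert k; induction x; intros [|km k]; simpl; intros; auto; discriminate. Qed.

Lemma fracs_spec m x : length (fracs m x) = length x /\
  forall i, (i < length x)%nat -> 0 <= nth i (fracs m x) 0 < 1.
Proof.
  split. unfold fracs; apply length_map.
  intros i Hi. unfold fracs.
  assert (G: forall (f : R -> R) l i, (i < length l)%nat -> nth i (map f l) 0 = f (nth i l 0)).
  { intros f l; induction l; simpl; intros [|i'] h; simpl in *; try lia; auto. apply IHl; lia. }
  rewrite G by auto. apply fl_spec.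
Qed.

Lemma cover_step d N psi x0 (m : nat) C0 L :
  length x0 = d ->
  (forall t, In t L -> let '(i, j, k) := t in (i < N)%nat /\ (1 <= j)%nat /\ length k = d) ->
  (forall x, length x = d -> (forall m, (m < d)%nat -> 0 <= nth m x 0 < 1) ->
      exists t, In t L /\ let '(i, j, k) := t in C0 <= Cnorm (psi i (dil j k x))) ->
  exists t : nat * nat * list Z, In t L /\
    let '(i, j, k) := t in
    C0 <= Cnorm (psi i (dil (m + j) (comb j m x0 k) x0)).
Proof.
  intros Hx HL Hc. destruct (fracs_spec m x0) as [H1 H2].
  destruct (Hc (fracs m x0)) as [[[i j] k] [Hin Hk]]. lia.
  intros; apply H2; lia.
  exists (i, j, k); split; auto. rewrite <- dil_comb. auto.
Qed.

Definition mkc (Js I : nat -> nat) (K : nat -> list Z) (v : nat -> R) : coeffs :=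
  fun i j k =>
    match find (fun n => Nat.eqb (Js n) j) (seq 0 (S j)) with
    | Some n => if Nat.eq_dec i (I n) then if list_eq_dec Z.eq_dec k (K n) then (v n, 0) else (0, 0) else (0, 0)
    | None => (0, 0)
    end.

Lemma find_Js (Js : nat -> nat) n :
  (forall a b, (a < b)%nat -> (Js a < Js b)%nat) -> (n <= Js n)%nat ->
  find (fun m => Nat.eqb (Js m) (Js n)) (seq 0 (S (Js n))) = Some n.
Proof.
  intros Hm Hn. destruct (find _ _) as [m|] eqn:E.
  - apply find_some in E as [_ E]. apply Nat.eqb_eq in E. f_equal.
    destruct (Nat.lt_trichotomy m n) as [h|[h|h]]; auto; apply Hm in h; lia.
  - pose proof (find_none _ _ E n) as h. cbv beta in h. rewrite Nat.eqb_refl in h. discriminate h. apply in_seq. lia.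
Qed.

Lemma find_Js' (Js : nat -> nat) j n :
  find (fun m => Nat.eqb (Js m) j) (seq 0 (S j)) = Some n -> Js n = j.
Proof. intros E. apply find_some in E as [_ E]. apply Nat.eqb_eq; auto. Qed.

Lemma mkc_val Js I K v n :
  (forall a b, (a < b)%nat -> (Js a < Js b)%nat) -> (n <= Js n)%nat ->
  mkc Js I K v (I n) (Js n) (K n) = (v n, 0).
Proof.
  intros. unfold mkc. rewrite find_Js by auto.
  destruct Nat.eq_dec; [|tauto]. destruct list_eq_dec; tauto.
Qed.

Definition Ef (Js : nat -> nat) (j : nat) : R :=
  match find (fun m => Nat.eqb (Js m) j) (seq 0 (S j)) with
  | Some n => pow2 (- INR n) | None => 0 end.

Lemma mkc_layer d N s p Js I K v j n :
  valid_exp p ->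
  (forall m, v m = pow2 ((-s + d_over d p) * INR (Js m)) * pow2 (- INR m)) ->
  layer d N s p (mkc Js I K v) j n <= Ef Js j.
Proof.
  intros Hp Hv. unfold Ef. destruct (find _ _) as [m|] eqn:E.
  - pose proof (find_Js' _ _ _ E) as HJ.
    assert (Hvp : 0 <= v m) by (rewrite Hv; left; apply Rmult_lt_0_compat; apply pow2_pos).
    eapply Rle_trans. apply (layer_bound _ _ _ _ _ _ _ (I m) (K m) (v m)); auto.
    + intros i k Hik. unfold mkc. rewrite E.
      destruct Nat.eq_dec; [destruct list_eq_dec|]; try (apply Cnorm_real; lra).
      subst; tauto.
    + unfold mkc. rewrite E. destruct Nat.eq_dec; [|tauto]. destruct list_eq_dec; [|tauto].
      rewrite Cnorm_real; lra.
    + rewrite Hv, HJ, <- Rmult_assoc, <- pow2_plus.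
      replace (- (- s + d_over d p) * INR j + (- s + d_over d p) * INR j) with 0 by ring.
      rewrite pow2_0; lra.
  - eapply Rle_trans. apply (layer_bound _ _ _ _ _ _ _ 0%nat nil 0); auto. lra.
    + intros i k _. unfold mkc. rewrite E. apply Cnorm_real; lra.
    + unfold mkc. rewrite E. rewrite Cnorm_real; lra.
    + lra.
Qed.

Lemma mkc_bound d p s Js I K v i j k :
  (forall m, v m = pow2 ((-s + d_over d p) * INR (Js m)) * pow2 (- INR m)) ->
  Cnorm (mkc Js I K v i j k) <= pow2 ((-s + d_over d p) * INR j).
Proof.
  intros Hv. unfold mkc. destruct (find _ _) as [m|] eqn:E.
  2: rewrite Cnorm_real; [left; apply pow2_pos| lra].
  pose proof (find_Js' _ _ _ E) as HJ.
  assert (Hvp : 0 <= v m) by (rewrite Hv; left; apply Rmult_lt_0_compat; apply pow2_pos).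
  destruct Nat.eq_dec; [destruct list_eq_dec|]; rewrite Cnorm_real; try lra;
    try (left; apply pow2_pos).
  rewrite Hv, HJ. rewrite <- (Rmult_1_r (pow2 _)) at 2. apply Rmult_le_compat_l.
  left; apply pow2_pos. rewrite <- pow2_0. apply pow2_le. pose proof (pos_INR m). lra.
Qed.

Lemma Ef_nonneg Js j : 0 <= Ef Js j.
Proof. unfold Ef. destruct find. left; apply pow2_pos. lra. Qed.

Lemma Ef_le1 Js j : Ef Js j <= 1.
Proof. unfold Ef. destruct find. rewrite <- pow2_0. apply pow2_le. pose proof (pos_INR n). lra. lra. Qed.

Lemma geom x M : 0 <= x < 1 -> sumR (map (fun m => x ^ m) (seq 0 M)) <= 1 / (1 - x).
Proof.
  intros Hx.
  assert (E : sumR (map (fun m => x ^ m) (seq 0 M)) * (1 - x) = 1 - x ^ M).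
  { induction M. simpl; ring. rewrite seq_S, map_app, sumR_app. simpl.
    rewrite Rmult_plus_distr_r, IHM. ring. }
  assert (0 <= x ^ M) by (apply pow_le; lra).
  apply Rmult_le_reg_r with (1 - x). lra.
  rewrite E. field_simplify; lra.
Qed.

Lemma Ef_sum Js r J :
  (forall n, (n <= Js n)%nat) -> 0 < r ->
  sumR (map (fun j => rpow (Ef Js j) r) (seq 0 (S J))) <= 1 / (1 - pow2 (- r)).
Proof.
  intros Hn Hr.
  set (w := fun m : nat => pow2 (- INR m * r)).
  set (F := fun j m : nat => if Nat.eqb (Js m) j then w m else 0).
  assert (Hw : forall m, 0 <= w m) by (intros; left; apply pow2_pos).
  eapply Rle_trans. apply (sumR_le _ (fun j => sumR (map (F j) (seq 0 (S J))))).
  { intros j Hj. apply in_seq in Hj. unfold Ef. destruct (find _ _) as [m|] eqn:E.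
    - pose proof (find_Js' _ _ _ E) as HJ. specialize (Hn m).
      rewrite rpow_pos_eq by apply pow2_pos. unfold pow2 at 1. rewrite Rpower_mult.
      replace (Rpower 2 (- INR m * r)) with (F j m).
      apply (sumR_term (F j) _ m). apply in_seq; lia.
      + intros; unfold F; destruct Nat.eqb; auto; lra.
      + unfold F. rewrite HJ, Nat.eqb_refl. unfold w, pow2. reflexivity.
    - rewrite rpow_le0 by lra. apply sumR_nonneg. intros; unfold F; destruct Nat.eqb; auto; lra. }
  rewrite sumR_swap.
  eapply Rle_trans. apply (sumR_le _ w).
  { intros m _. eapply Rle_trans. apply (sumR_single _ _ (Js m)). apply seq_NoDup.
    - intros j Hj. unfold F. destruct (Nat.eqb_spec (Js m) j); auto; congruence.
    - unfold F. rewrite Nat.eqb_refl; auto.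
    - unfold F. rewrite Nat.eqb_refl; lra. }
  assert (Hx : 0 < pow2 (- r) < 1).
  { split. apply pow2_pos. rewrite <- pow2_0. unfold pow2. apply Rpower_lt; lra. }
  replace (map w (seq 0 (S J))) with (map (fun m => pow2 (- r) ^ m) (seq 0 (S J))).
  apply geom; lra.
  apply map_ext. intros m. unfold w, pow2. rewrite <- Rpower_pow by apply Rpower_pos.
  rewrite Rpower_mult. f_equal; ring.
Qed.

Lemma nat_unbounded A : exists n : nat, A < INR n.
Proof.
  exists (Z.to_nat (up A)). rewrite INR_IZR_INZ. pose proof (archimed A) as [h _].
  destruct (Z_le_gt_dec 0 (up A)).
  - rewrite Z2Nat.id by lia; lra.
  - assert (IZR (up A) < 0) by (apply IZR_lt; lia).
    assert (0 <= IZR (Z.of_nat (Z.to_nat (up A)))) by (apply IZR_le; lia). lra.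
Qed.

Lemma ln2_pos : 0 < ln 2.
Proof. rewrite <- ln_1. apply ln_increasing; lra. Qed.

Lemma pow2_big y : 0 <= y -> 1 + y * ln 2 <= pow2 y.
Proof.
  intros. unfold pow2, Rpower. destruct (Req_dec (y * ln 2) 0) as [h|h].
  rewrite h, exp_0; lra. left. apply exp_ineq1. auto.
Qed.

Lemma sumj_le (L : list (nat * nat * list Z)) t :
  In t L -> (snd (fst t) <= list_sum (map (fun t => snd (fst t)) L))%nat.
Proof. induction L; simpl; [tauto|]. intros [->|h]; try lia. specialize (IHL h); lia. Qed.

Theorem mainTheorem15 (d N : nat) (psi : nat -> list R -> Cx) (s : R) (p q : ext)
  (x0 : list R) :
  (1 <= d)%nat -> (1 <= N)%nat ->
  (forall i, (i < N)%nat -> wavelet_ok d (psi i)) ->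
  valid_exp p -> valid_exp q -> length x0 = d ->
  dyadic_covering d N psi ->
  exists c : coeffs, in_besov d N s p q c /\
    is_lub (div_set d N psi c x0) (- s + d_over d p).
Proof.
  intros Hd HN Hok Hp Hq Hx [C0 [HC0 [L [HL Hcov]]]].
  set (a := - s + d_over d p).
  set (T := S (list_sum (map (fun t : nat * nat * list Z => snd (fst t)) L))).
  assert (HT : forall t, In t L -> (snd (fst t) < T)%nat).
  { intros t h. unfold T. pose proof (sumj_le _ _ h). lia. }
  assert (HT1 : (1 <= T)%nat) by (unfold T; lia).
  clearbody T.
  assert (Hch : forall n : nat, exists t : nat * nat * list Z, In t L /\
    let '(i, j, k) := t in
    C0 <= Cnorm (psi i (dil (T * n * n + j) (comb j (T * n * n) x0 k) x0))).
  { intros n. apply cover_step with d N; auto. }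
  apply functional_choice in Hch as [tf Htf].
  set (I := fun n => fst (fst (tf n))).
  set (jl := fun n => snd (fst (tf n))).
  set (kl := fun n => snd (tf n)).
  set (Js := fun n => (T * n * n + jl n)%nat).
  set (K := fun n => comb (jl n) (T * n * n) x0 (kl n)).
  set (v := fun n => pow2 (a * INR (Js n)) * pow2 (- INR n)).
  assert (Hprop : forall n, (I n < N)%nat /\ (1 <= jl n < T)%nat /\ length (kl n) = d /\
      C0 <= Cnorm (wav psi (I n) (Js n) (K n) x0)).
  { intros n. destruct (Htf n) as [Hin Hc]. pose proof (HL _ Hin) as HLt.
    pose proof (HT _ Hin) as Hs. unfold wav, Js, K, I, jl, kl.
    destruct (tf n) as [[i j] k]. cbn [fst snd] in *. destruct HLt as [h1 [h2 h3]]. repeat split; auto; lia. }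
  assert (HK : forall n, length (K n) = d).
  { intros n. unfold K. rewrite length_comb; auto. destruct (Hprop n) as [_ [_ [h _]]]. lia. }
  assert (Hmono : forall m n, (m < n)%nat -> (Js m < Js n)%nat).
  { intros m n h. unfold Js. pose proof (Hprop m) as [_ [hm _]]. pose proof (Hprop n) as [_ [hn _]].
    assert (T * (m + 1) * (m + 1) <= T * n * n)%nat by (apply Nat.mul_le_mono; [apply Nat.mul_le_mono|]; lia).
    nia. }
  assert (Hsq : forall n, (n * n <= Js n)%nat).
  { intros n. unfold Js. nia. }
  assert (Hge : forall n, (n <= Js n)%nat) by (intros n; specialize (Hsq n); nia).
  assert (Hv : forall m, v m = pow2 ((-s + d_over d p) * INR (Js m)) * pow2 (- INR m)) by reflexivity.
  set (c := mkc Js I K v).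
  assert (HB0 : forall i, exists B, (i < N)%nat -> forall x, length x = d -> Cnorm (psi i x) <= B).
  { intros i. destruct (Nat.lt_ge_cases i N) as [h|h].
    - destruct (Hok i h) as [[B HB] _]. exists B; auto.
    - exists 0; intros; lia. }
  apply functional_choice in HB0 as [Bf HBf].
  set (Btot := sumR (map (fun i => Rabs (Bf i)) (seq 0 N))).
  assert (HB : forall i j k, (i < N)%nat -> length k = d -> Cnorm (wav psi i j k x0) <= Btot).
  { intros i j k hi hk. unfold wav. eapply Rle_trans. apply HBf; auto.
    rewrite length_dil; lia. eapply Rle_trans. apply Rle_abs.
    apply (sumR_term (fun i => Rabs (Bf i))). apply in_seq; lia. intros; apply Rabs_pos. }
  exists c. split.
  - destruct q as [r|]; unfold in_besov; simpl in Hq.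
    + exists (1 / (1 - pow2 (- r))). intros J n.
      eapply Rle_trans; [|apply (Ef_sum Js r J Hge Hq)].
      apply sumR_le. intros j _. apply rpow_mono. lra. apply mkc_layer; auto.
    + exists 1. intros j n. eapply Rle_trans. apply mkc_layer; auto. apply Ef_le1.
  - split.
    + intros g [Cst [HCst [I' [J' [K' [HIK [Hinf Hineq]]]]]]].
      apply Rnot_lt_le. intro hg.
      set (del := g - a).
      assert (HBt : 0 <= Btot) by (apply sumR_nonneg; intros; apply Rabs_pos).
      destruct (nat_unbounded (Btot / Cst / (del * ln 2))) as [M HM].
      destruct (Hinf M) as [n0 Hn0]. specialize (Hn0 n0 (le_n _)).
      specialize (Hineq n0). destruct (HIK n0) as [hi hk].
      pose proof (mkc_bound d p s Js I K v (I' n0) (J' n0) (K' n0) Hv) as Hc.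
      pose proof (HB _ (J' n0) _ hi hk) as Hw.
      fold a in Hc.
      assert (Hprod : Cst * pow2 (g * INR (J' n0)) <= pow2 (a * INR (J' n0)) * Btot).
      { eapply Rle_trans. apply Hineq. apply Rmult_le_compat; auto using Cnorm_nonneg. }
      replace (g * INR (J' n0)) with (del * INR (J' n0) + a * INR (J' n0)) in Hprod by (unfold del; ring).
      rewrite pow2_plus in Hprod.
      assert (Hpa := pow2_pos (a * INR (J' n0))).
      assert (H1 : Cst * pow2 (del * INR (J' n0)) <= Btot).
      { apply Rmult_le_reg_r with (pow2 (a * INR (J' n0))); auto. nra. }
      assert (Hdl : 0 < del * ln 2) by (pose proof ln2_pos; unfold del; nra).
      assert (HMJ : INR M <= INR (J' n0)) by (apply le_INR; auto).
      assert (H2 := pow2_big (del * INR (J' n0))).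
      assert (0 <= del * INR (J' n0)) by (pose proof (pos_INR (J' n0)); unfold del; nra).
      specialize (H2 H).
      assert (Btot / Cst < del * INR (J' n0) * ln 2).
      { assert (del <> 0) by (unfold del; lra). assert (ln 2 <> 0) by (pose proof ln2_pos; lra).
        replace (Btot / Cst) with (Btot / Cst / (del * ln 2) * (del * ln 2)) by (field; repeat split; lra).
        replace (del * INR (J' n0) * ln 2) with (INR (J' n0) * (del * ln 2)) by ring.
        apply Rmult_lt_compat_r; lra. }
      assert (Btot < Cst * (del * INR (J' n0) * ln 2)).
      { apply Rmult_lt_reg_r with (/ Cst). apply Rinv_0_lt_compat; auto.
        replace (Cst * (del * INR (J' n0) * ln 2) * / Cst) with (del * INR (J' n0) * ln 2) by (field; lra).
        exact H0. }
      nra.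
    + intros b Hb. apply Rnot_lt_le. intro hb.
      set (g := (a + b) / 2). set (del := a - g).
      assert (Hdel : 0 < del) by (unfold del, g; lra).
      assert (Hin : div_set d N psi c x0 g).
      { exists (C0 * pow2 (- / (4 * del))). split.
        apply Rmult_lt_0_compat; auto; apply pow2_pos.
        exists I, Js, K. split; [|split].
        - intros n; split; [apply Hprop|apply HK].
        - intros M. exists M. intros n hn. specialize (Hge n). lia.
        - intros n. unfold c. rewrite mkc_val by auto. rewrite Cnorm_real by (left; unfold v; apply Rmult_lt_0_compat; apply pow2_pos).
          destruct (Hprop n) as [_ [_ [_ HW]]].
          unfold v. rewrite <- pow2_plus.
          rewrite Rmult_assoc, <- pow2_plus. rewrite Rmult_comm.
          apply Rmult_le_compat; try lra. left; apply pow2_pos.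
          apply pow2_le.
          assert (HJ : INR n * INR n <= INR (Js n)) by (rewrite <- mult_INR; apply le_INR; auto).
          set (u := / (4 * del)).
          assert (Hu : 0 < u) by (unfold u; apply Rinv_0_lt_compat; lra).
          assert (E : del * INR n * INR n - INR n + u = u * (2 * del * INR n - 1) ^ 2)
            by (unfold u; field; lra).
          assert (0 <= u * (2 * del * INR n - 1) ^ 2) by (apply Rmult_le_pos; [lra| apply pow2_ge_0]).
          assert (g = a - del) by (unfold del; ring).
          rewrite H0. nra. }
      pose proof (Hb g Hin). unfold g in H. lra.
Qed.
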